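(* Use the setting of the context, let $\rho>0$, and for $\star\in\{\rm d,i\}$ let $\Lambda^\star=\max_{\boldsymbol w\in\mathrm{range}(\boldsymbol I_T\otimes\boldsymbol\Pi^\star),\,\boldsymbol w\ne\boldsymbol 0}\boldsymbol w^{\mathsf H}\boldsymbol\Xi\boldsymbol w/\|\boldsymbol w\|^2$ (assuming $\boldsymbol\Pi^\star\neq\boldsymbol 0$). Then: (a) If $\Lambda^{\rm d}\ge\rho$, then $\boldsymbol U^{\mathsf H}\boldsymbol s_0^*\neq\boldsymbol 0$. (b) If $\Lambda^{\rm i}\ge\rho$, then $\boldsymbol U^{\mathsf H}\boldsymbol s_q^*\neq\boldsymbol 0$ for at least one $q\in\{1,\dots,Q\}$. (c) If $\mathrm{rank}(\boldsymbol U)=N_t$, $b_0>0$, $\boldsymbol g_0^{\mathsf H}\boldsymbol\Pi^{\rm d}\boldsymbol g_0>0$, and $$\lambda_{\min}(\boldsymbol U\boldsymbol U^{\mathsf H})\ge\frac{\rho\,\sigma_z^2/N_t}{b_0\,\boldsymbol g_0^{\mathsf H}\boldsymbol\Pi^{\rm d}\boldsymbol g_0},$$ then $\Lambda^{\rm d}\ge\rho$. (d) If $\mathrm{rank}(\boldsymbol U)=N_t$, $Q\ge1$, $\max_{1\le q\le Q}\sigma_q^2\boldsymbol g_q^{\mathsf H}\boldsymbol\Pi^{\rm i}\boldsymbol g_q>0$, and $$\lambda_{\min}(\boldsymbol U\boldsymbol U^{\mathsf H})\ge\frac{\rho\,\sigma_z^2/N_t}{\max_{1\le q\le Q}\sigma_q^2\,\boldsymbol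 g_q^{\mathsf H}\boldsymbol\Pi^{\rm i}\boldsymbol g_q},$$ then $\Lambda^{\rm i}\ge\rho$.
   Context: Let $T,N_t,N_m\ge1$, $Q\ge0$ be integers. Let $\boldsymbol g_0,\dots,\boldsymbol g_Q\in\mathbb{C}^{N_m}$ and $\boldsymbol s_0,\dots,\boldsymbol s_Q\in\mathbb{C}^{N_t}$ be steering vectors all of whose entries have unit magnitude (so $\|\boldsymbol s_q\|^2=N_t$). Let $\boldsymbol U\in\mathbb{C}^{N_t\times T}$ be the transmit code matrix and $\boldsymbol u=\mathrm{vec}(\boldsymbol U)$ (columns stacked). Let $\boldsymbol G_q=\boldsymbol I_T\otimes\boldsymbol g_q\boldsymbol s_q^{\mathsf T}$, let $b_0\ge0$ (direct-path power $|\beta_0|^2$), $\sigma_1^2,\dots,\sigma_Q^2>0$ (indirect-path powers), $\sigma_z^2>0$ (noise variance), and $\boldsymbol\Xi=\frac{b_0}{\sigma_z^2}\boldsymbol G_0\boldsymbol u\boldsymbol u^{\mathsf H}\boldsymbol G_0^{\mathsf H}+\sum_{q=1}^Q\frac{\sigma_q^2}{\sigma_z^2}\boldsymbol G_q\boldsymbol u\boldsymbol u^{\mathsf H}\boldsymbol G_q^{\mathsf H}$. $\boldsymbol\Pi^{\rm d}$ is the orthogonal projector onto the orthogonal complement of $\mathrm{span}\{\boldsymbol g_1,\dots,\boldsymbol g_Q\}$ (or $\boldsymbol I_{N_m}$ if $Q=0$); $\boldsymbol\Pi^{\rm i}$ is the orthogonal projector onto the orthogonal complement of $\mathrm{span}\{\boldsymbol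 g_0\}$ if $b_0>0$ (or $\boldsymbol I_{N_m}$ if $b_0=0$). $\Lambda^{\rm d}$ (resp. $\Lambda^{\rm i}$) is the maximal user SNR achievable with a receive filter zero-forcing the indirect paths (resp. the direct path); the condition $\Lambda^\star\ge\rho$ is the user's SNR/error-rate constraint. $\boldsymbol s^*$ is the entrywise complex conjugate, $\lambda_{\min}$ the smallest eigenvalue. *)

(* Defs.v *)
From HB Require Import structures.
From mathcomp Require Import all_boot all_order all_algebra.
From mathcomp Require Import reals complex mxtens.
Set Implicit Arguments. Unset Strict Implicit. Unset Printing Implicit Defensive.
Import Order.TTheory GRing.Theory Num.Theory.
Local Open Scope ring_scope.

Section Defs.
Variable C : numClosedFieldType.

Definition hconj {m n : nat} (A : 'M[C]_(m, n)) : 'M[C]_(n, m) :=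
  (map_mx Num.conj A)^T.

Definition econj {m n : nat} (A : 'M[C]_(m, n)) : 'M[C]_(m, n) :=
  map_mx Num.conj A.

(* vec(U): columns stacked; entry j*m + i is U i j *)
Definition vecmx {m n : nat} (U : 'M[C]_(m, n)) : 'cV[C]_(n * m) :=
  \col_k U (mxtens_unindex k).2 (mxtens_unindex k).1.

Definition sqnorm {n : nat} (w : 'cV[C]_n) : C := (hconj w *m w) 0 0.

Definition qform {n : nat} (A : 'M[C]_n) (x : 'cV[C]_n) : C :=
  (hconj x *m A *m x) 0 0.

Definition in_range {m n : nat} (A : 'M[C]_(m, n)) (w : 'cV[C]_m) : Prop :=
  exists y : 'cV[C]_n, w = A *m y.

Definition is_orth_proj {n : nat} (P : 'M[C]_n) (S : 'cV[C]_n -> Prop) : Prop :=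
  [/\ hconj P = P, P *m P = P & forall x, S x <-> in_range P x].

Definition is_max_rayleigh {n k : nat} (Lam : C) (Xi : 'M[C]_n)
  (B : 'M[C]_(n, k)) : Prop :=
  (exists2 w, in_range B w /\ w != 0 & qform Xi w / sqnorm w = Lam) /\
  (forall w, in_range B w -> w != 0 -> qform Xi w / sqnorm w <= Lam).

Definition is_min_eigenvalue {n : nat} (lam : C) (A : 'M[C]_n) : Prop :=
  eigenvalue A lam /\ (forall a, eigenvalue A a -> lam <= a).

Definition is_max_of {I : finType} (F : I -> C) (m : C) : Prop :=
  (exists i, F i = m) /\ (forall i, F i <= m).

End Defs.

Definition Gu {C : numClosedFieldType} (T Nm Nt : nat) (g : 'cV[C]_Nm)
  (s : 'cV[C]_Nt) (U : 'M[C]_(Nt, T)) : 'cV[C]_(T * Nm) :=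
  (1%:M : 'M[C]_T) *t (g *m s^T) *m vecmx U.

Definition Xi {C : numClosedFieldType} (T Nm Nt Q : nat)
  (g0 : 'cV[C]_Nm) (s0 : 'cV[C]_Nt) (g : 'I_Q -> 'cV[C]_Nm)
  (s : 'I_Q -> 'cV[C]_Nt) (b0 : C) (sig2 : 'I_Q -> C) (sz2 : C)
  (U : 'M[C]_(Nt, T)) : 'M[C]_(T * Nm) :=
  (b0 / sz2) *: (Gu g0 s0 U *m hconj (Gu g0 s0 U)) +
  \sum_(q < Q) (sig2 q / sz2) *: (Gu (g q) (s q) U *m hconj (Gu (g q) (s q) U)).

(* Main.v *)
Require Import Defs.
From HB Require Import structures.
From mathcomp Require Import all_boot all_order all_algebra.
From mathcomp Require Import reals complex mxtens sesquilinear spectral ring.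
Set Implicit Arguments. Unset Strict Implicit. Unset Printing Implicit Defensive.
Import Order.TTheory GRing.Theory Num.Theory.
Local Open Scope ring_scope.

Section H.
Variable C : numClosedFieldType.

Lemma hconjM m n p (A : 'M[C]_(m, n)) (B : 'M[C]_(n, p)) :
  hconj (A *m B) = hconj B *m hconj A.
Proof. by rewrite /hconj map_mxM trmx_mul. Qed.

Lemma hconjK m n (A : 'M[C]_(m, n)) : hconj (hconj A) = A.
Proof. by apply/matrixP=> i j; rewrite !mxE conjCK. Qed.

Lemma hconjT m n p q (A : 'M[C]_(m, n)) (B : 'M[C]_(p, q)) :
  hconj (A *t B) = hconj A *t hconj B.
Proof. by apply/matrixP=> i j; rewrite !mxE rmorphM. Qed.

Lemma hconj_tr m n (A : 'M[C]_(m, n)) : hconj A = map_mx Num.conj A^T.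
Proof. by rewrite /hconj map_trmx. Qed.

Lemma tens11 m n (a : 'cV[C]_m) (b : 'cV[C]_n) : 
  (a *t b : 'cV[C]_(m * n)) = a *t b.
Proof. by []. Qed.

Lemma tens11E (a b : 'M[C]_1) : (a *t b) 0 0 = a 0 0 * b 0 0.
Proof. by rewrite !mxE !ord1. Qed.

Lemma sum_tens (m n : nat) (F : 'I_(m * n) -> C) :
  \sum_k F k = \sum_(i < m) \sum_(j < n) F (mxtens_index (i, j)).
Proof.
rewrite pair_big /=.
rewrite (reindex (@mxtens_index m n)) /=; last first.
  by exists (@mxtens_unindex m n) => x _; [apply: mxtens_indexK | apply: mxtens_unindexK].
by apply: eq_bigr => -[i j].
Qed.

Lemma tens_cV m n (a : 'cV[C]_m) (b : 'cV[C]_n) j i :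
  (a *t b) (mxtens_index (j, i)) 0 = a j 0 * b i 0.
Proof.
have E : (0 : 'I_1) = mxtens_index (0 : 'I_1, 0 : 'I_1) by apply: val_inj.
by rewrite [in LHS]E tensmxE.
Qed.

Lemma GuE T Nm Nt (g : 'cV[C]_Nm) (s : 'cV[C]_Nt) (U : 'M[C]_(Nt, T)) :
  Gu g s U = (U^T *m s) *t g.
Proof.
apply/matrixP => k l; rewrite !ord1.
case: (mxtens_indexP k) => j i.
rewrite tens_cV !mxE sum_tens.
rewrite (bigD1 j) //=.
rewrite [X in _ + X]big1 ?addr0; last first.
  move=> j' nj; apply: big1 => i' _.
  rewrite !mxE !mxtens_indexK /=. by rewrite eq_sym (negbTE nj) mulr0n mul0r mul0r.
rewrite mulr_suml; apply: eq_bigr => i' _.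
rewrite !mxE !mxtens_indexK /= eqxx mulr1n mul1r.
by rewrite big_ord1 !mxE; ring.
Qed.
Definition inner n (x y : 'cV[C]_n) := (hconj x *m y) 0 0.

Lemma innerT m n (a c : 'cV[C]_m) (b d : 'cV[C]_n) :
  inner (a *t b) (c *t d) = inner a c * inner b d.
Proof. by rewrite /inner (hconjT a b) (tensmx_mul (hconj a) (hconj b) c d) tens11E. Qed.

Lemma inner_conj n (x y : 'cV[C]_n) : (inner x y)^* = inner y x.
Proof.
rewrite /inner; have -> : hconj y *m x = hconj (hconj x *m y) by rewrite hconjM hconjK.
by rewrite !mxE.
Qed.

Lemma qformD n (A B : 'M[C]_n) w : qform (A + B) w = qform A w + qform B w.
Proof. by rewrite /qform mulmxDr mulmxDl mxE. Qed.

Lemma qformZ n (A : 'M[C]_n) c w : qform (c *: A) w = c * qform A w.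
Proof. by rewrite /qform -scalemxAr -scalemxAl mxE. Qed.

Lemma qform0 n (w : 'cV[C]_n) : qform 0 w = 0.
Proof. by rewrite /qform mulmx0 mul0mx mxE. Qed.

Lemma qform_sum n I (r : seq I) (P : pred I) (F : I -> 'M[C]_n) w :
  qform (\sum_(i <- r | P i) F i) w = \sum_(i <- r | P i) qform (F i) w.
Proof.
exact: (big_morph (fun A => qform A w) (fun A B => qformD A B w) (qform0 w)).
Qed.

Lemma qform_rank1 n (v w : 'cV[C]_n) :
  qform (v *m hconj v) w = `|inner v w| ^+ 2.
Proof.
rewrite /qform normCKC inner_conj /inner !mulmxA -(mulmxA (hconj w *m v)).
by rewrite [in LHS]mxE big_ord1.
Qed.

Lemma range_orth m n (a : 'cV[C]_m) (g : 'cV[C]_n) (P : 'M[C]_n) y :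
  (forall x : 'cV_n, hconj g *m (P *m x) = 0) ->
  inner (a *t g) (((1%:M : 'M_m) *t P) *m y) = 0.
Proof.
move=> H; have gP : hconj g *m P = 0.
  apply/matrixP => i j; have := H (delta_mx j 0).
  move/matrixP/(_ i 0); rewrite mulmxA -colE !mxE => ->.
  done.
by rewrite /inner (hconjT a g) mulmxA (tensmx_mul (hconj a) (hconj g) 1%:M P) gP tensmx0 mul0mx mxE.
Qed.

Lemma herm_min_eig n (A : 'M[C]_n) lam (x : 'cV[C]_n) :
  hconj A = A -> is_min_eigenvalue lam A -> lam * sqnorm x <= qform A x.
Proof.
move=> hA [_ lmin].
have An : A \is normalmx by apply/normalmxP; rewrite -!hconj_tr hA.
have /orthomx_spectralP Aeq := An.
set P := spectralmx A in Aeq; set d := spectral_diag A in Aeq.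
have Pu : P \is unitarymx by exact: spectral_unitarymx.
have PPt : P *m hconj P = 1%:M by rewrite hconj_tr; apply/unitarymxP.
have PtP : hconj P *m P = 1%:M by apply: mulmx1C.
have iP : invmx P = hconj P by rewrite hconj_tr invmx_unitary.
rewrite iP in Aeq.
have eig : forall i, lam <= d 0 i.
  move=> i; apply: lmin; apply/eigenvalueP; exists (row i P).
    rewrite Aeq rowE !mulmxA -(mulmxA _ P) PPt mulmx1.
    have -> : (delta_mx 0 i : 'rV[C]_n) *m diag_mx d = d 0 i *: (delta_mx 0 i : 'rV[C]_n).
      apply/matrixP => a b; rewrite mul_mx_diag !mxE ord1 eqxx /=.
      have [->|nb] := eqVneq b i; first by rewrite mulr1n mul1r mulr1.
      by rewrite mulr0n mul0r mulr0.
    by rewrite -scalemxAl.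
  apply/eqP => H; have := congr1 (mulmx^~ (hconj P)) H.
  rewrite /= -row_mul PPt mul0mx => /matrixP/(_ 0 i); rewrite !mxE eqxx /= => /eqP.
  by rewrite oner_eq0.
set y := P *m x.
have -> : sqnorm x = inner y y.
  by rewrite /sqnorm /inner /y hconjM -mulmxA (mulmxA (hconj P)) PtP mul1mx.
have -> : qform A x = (hconj y *m diag_mx d *m y) 0 0.
  by rewrite /qform /y hconjM Aeq !mulmxA.
rewrite /inner !mxE mulr_sumr; apply: ler_sum => i _.
rewrite mul_mx_diag !mxE.
set z := \sum_j _.
rewrite mulrAC [in X in _ <= X]mulrC; apply: ler_wpM2r (eig i).
by rewrite -normCKC exprn_ge0.
Qed.
Lemma econjM m n p (A : 'M[C]_(m, n)) (B : 'M[C]_(n, p)) :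
  econj (A *m B) = econj A *m econj B.
Proof. by rewrite /econj map_mxM. Qed.

Lemma econjK m n (A : 'M[C]_(m, n)) : econj (econj A) = A.
Proof. by apply/matrixP=> i j; rewrite !mxE conjCK. Qed.

Lemma hconj_econj m n (U : 'M[C]_(m, n)) : hconj U = econj U^T.
Proof. by rewrite /hconj /econj map_trmx. Qed.

Lemma inner_econj n (v : 'cV[C]_n) : inner (econj v) (econj v) = inner v v.
Proof.
rewrite /inner !mxE; apply: eq_bigr => i _; rewrite !mxE conjCK mulrC //.
Qed.

Lemma inner_unit n (v : 'cV[C]_n) : (forall k, `|v k 0| = 1) -> inner v v = n%:R.
Proof.
move=> H; rewrite /inner mxE (eq_bigr (fun=> 1)) ?sumr_const ?card_ord //.
by move=> i _; rewrite !mxE -(normCKC (v i 0)) H expr1n.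
Qed.

Lemma na_ge n T (U : 'M[C]_(n, T)) (s : 'cV[C]_n) lam :
  (forall k, `|s k 0| = 1) -> is_min_eigenvalue lam (U *m hconj U) ->
  lam * n%:R <= inner (U^T *m s) (U^T *m s).
Proof.
move=> Hs Hl.
have := herm_min_eig (econj s) _ Hl.
rewrite /sqnorm -/(inner _ _) inner_econj inner_unit // => H.
have -> : inner (U^T *m s) (U^T *m s) = qform (U *m hconj U) (econj s).
  rewrite -inner_econj /qform /inner econjM -hconj_econj hconjM hconjK !mulmxA //.
apply: H; by rewrite hconjM hconjK.
Qed.

Lemma sqnormE n (w : 'cV[C]_n) : sqnorm w = inner w w. Proof. by []. Qed.

Lemma inner0 n (w : 'cV[C]_n) : inner w w = 0 -> w = 0.
Proof.
rewrite /inner mxE => H; apply/matrixP => i j; rewrite ord1 mxE.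
have hge : forall k, 0 <= (hconj w) 0 k * w k 0.
  by move=> k; rewrite !mxE -(normCKC (w k 0)) exprn_ge0.
have := psumr_eq0P (fun k _ => hge k) H isT.
move=> /(_ i); rewrite !mxE -(normCKC (w i 0)).
by move/eqP; rewrite sqrf_eq0 normr_eq0 => /eqP.
Qed.

Lemma arith (F : numFieldType) (rho sz2 N K lam na : F) :
  0 < sz2 -> 0 < N -> 0 < K -> (rho * sz2 / N) / K <= lam -> lam * N <= na ->
  rho <= K / sz2 * na.
Proof.
move=> hs hN hK; rewrite ler_pdivrMr // ler_pdivrMr // => h1 h2.
rewrite mulrAC ler_pdivlMr //; apply: (le_trans h1).
rewrite mulrAC [K * na]mulrC; apply: ler_wpM2r; first exact: ltW.
by [].
Qed.

Lemma key T Nm (a : 'cV[C]_T) (g : 'cV[C]_Nm) (P : 'M[C]_Nm) (X : 'M[C]_(T * Nm))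
  Lam coef :
  hconj P = P -> P *m P = P -> is_max_rayleigh Lam X ((1%:M : 'M_T) *t P) ->
  0 < inner a a -> 0 < qform P g ->
  coef * `|inner (a *t g) (((1%:M : 'M_T) *t P) *m (a *t g))| ^+ 2
    <= qform X (((1%:M : 'M_T) *t P) *m (a *t g)) ->
  coef * inner a a * qform P g <= Lam.
Proof.
move=> hP iP [_ Hmax] na0 c0 Hq.
set w := ((1%:M : 'M_T) *t P) *m (a *t g) in Hq *.
have wE : w = a *t (P *m g) by rewrite /w (tensmx_mul 1%:M P a g) mul1mx.
have iz : inner (a *t g) w = inner a a * qform P g.
  by rewrite wE innerT /qform /inner mulmxA.
have nw : sqnorm w = inner a a * qform P g.
  rewrite sqnormE wE innerT; congr (_ * _).
  by rewrite /inner /qform hconjM hP !mulmxA -(mulmxA _ P P) iP.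
have pos : 0 < inner a a * qform P g by apply: mulr_gt0.
have wn0 : w != 0.
  apply/eqP => w0; move: pos; rewrite -nw w0 /sqnorm mulmx0 mxE.
  by rewrite ltxx.
have := Hmax w (ex_intro _ (a *t g) erefl) wn0.
apply: le_trans; rewrite nw ler_pdivlMr //; apply: le_trans Hq.
by rewrite iz ger0_norm ?(ltW pos) // expr2 !mulrA.
Qed.

Lemma inner0l n (w : 'cV[C]_n) : inner 0 w = 0.
Proof. by rewrite /inner /hconj map_mx0 trmx0 mul0mx mxE. Qed.

Lemma qformXi T Nm Nt Q (g0 : 'cV[C]_Nm) s0 g s b0 sig2 sz2 (U : 'M[C]_(Nt, T))
  (w : 'cV[C]_(T * Nm)) :
  qform (@Xi C T Nm Nt Q g0 s0 g s b0 sig2 sz2 U) w =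
  b0 / sz2 * `|inner (Gu g0 s0 U) w| ^+ 2 +
  \sum_(q < Q) sig2 q / sz2 * `|inner (Gu (g q) (s q) U) w| ^+ 2.
Proof.
rewrite /Xi qformD qformZ qform_rank1 qform_sum; congr (_ + _).
by apply: eq_bigr => q _; rewrite qformZ qform_rank1.
Qed.

Lemma hconj1 n : hconj (1%:M : 'M[C]_n) = 1%:M.
Proof. by apply/matrixP => i j; rewrite !mxE eq_sym; case: (i == j); rewrite ?conjC1 ?conjC0. Qed.

End H.

Theorem proposition5 (R : realType) (T Nt Nm Q : nat)
  (g0 : 'cV[R[i]]_Nm) (s0 : 'cV[R[i]]_Nt)
  (g : 'I_Q -> 'cV[R[i]]_Nm) (s : 'I_Q -> 'cV[R[i]]_Nt)
  (U : 'M[R[i]]_(Nt, T)) (b0 : R[i]) (sig2 : 'I_Q -> R[i]) (sz2 : R[i])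
  (rho : R[i]) (Pi_d Pi_i : 'M[R[i]]_Nm) :
  (0 < T)%N -> (0 < Nt)%N -> (0 < Nm)%N ->
  (forall k, `|g0 k 0| = 1) -> (forall k, `|s0 k 0| = 1) ->
  (forall q k, `|g q k 0| = 1) -> (forall q k, `|s q k 0| = 1) ->
  0 <= b0 -> (forall q, 0 < sig2 q) -> 0 < sz2 -> 0 < rho ->
  is_orth_proj Pi_d (fun x => forall q, hconj (g q) *m x = 0) ->
  (0 < b0 -> is_orth_proj Pi_i (fun x => hconj g0 *m x = 0)) ->
  (b0 = 0 -> Pi_i = 1%:M) ->
  let Xi0 := Xi g0 s0 g s b0 sig2 sz2 U in
  (* (a) *)
  (forall Ld, Pi_d != 0 ->
     is_max_rayleigh Ld Xi0 ((1%:M : 'M_T) *t Pi_d) -> rho <= Ld ->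
     hconj U *m econj s0 != 0) /\
  (* (b) *)
  (forall Li, Pi_i != 0 ->
     is_max_rayleigh Li Xi0 ((1%:M : 'M_T) *t Pi_i) -> rho <= Li ->
     exists q : 'I_Q, hconj U *m econj (s q) != 0) /\
  (* (c) *)
  (forall Ld lam, Pi_d != 0 ->
     is_max_rayleigh Ld Xi0 ((1%:M : 'M_T) *t Pi_d) ->
     \rank U = Nt -> 0 < b0 -> 0 < qform Pi_d g0 ->
     is_min_eigenvalue lam (U *m hconj U) ->
     (rho * sz2 / Nt%:R) / (b0 * qform Pi_d g0) <= lam ->
     rho <= Ld) /\
  (* (d) *)
  (forall Li lam M, Pi_i != 0 ->
     is_max_rayleigh Li Xi0 ((1%:M : 'M_T) *t Pi_i) ->
     \rank U = Nt -> (0 < Q)%N ->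
     is_max_of (fun q => sig2 q * qform Pi_i (g q)) M -> 0 < M ->
     is_min_eigenvalue lam (U *m hconj U) ->
     (rho * sz2 / Nt%:R) / M <= lam ->
     rho <= Li).
Proof.
move=> hT hNt hNm hg0 hs0 hg hs hb0 hsig hsz hrho [hPd iPd rPd] hPi hPi1 Xi0.
have Pd_orth : forall q (x : 'cV_Nm), hconj (g q) *m (Pi_d *m x) = 0.
  by move=> q x; apply: (proj2 (rPd (Pi_d *m x)) (ex_intro _ x erefl)).
have b0cases : b0 = 0 \/ 0 < b0.
  by move: hb0; rewrite le0r => /orP[/eqP->|->]; [left|right].
have [hPi' iPi'] : hconj Pi_i = Pi_i /\ Pi_i *m Pi_i = Pi_i.
  case: b0cases => [b00|b0pos]; last by case: (hPi b0pos).
  by rewrite (hPi1 b00) hconj1 mulmx1.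
have Pi_orth : 0 < b0 -> forall x : 'cV_Nm, hconj g0 *m (Pi_i *m x) = 0.
  move=> /hPi [_ _ rPi] x.
  by apply: (proj2 (rPi (Pi_i *m x)) (ex_intro _ x erefl)).
have rng : forall (a : 'cV[R[i]]_T) (gg : 'cV[R[i]]_Nm) (P : 'M[R[i]]_Nm) w,
    (forall x : 'cV_Nm, hconj gg *m (P *m x) = 0) ->
    in_range ((1%:M : 'M_T) *t P) w -> inner (a *t gg) w = 0.
  move=> a gg P w H [y wy]; rewrite wy; exact: range_orth.
have Ntpos : 0 < (Nt%:R : R[i]) by rewrite ltr0n.
have zero_contra : forall L (X : 'M[R[i]]_(T * Nm)) (B : 'M[R[i]]_(T * Nm)),
    is_max_rayleigh L X B -> rho <= L ->
    (forall w, in_range B w -> qform X w = 0) -> False.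
  move=> L X B [[w [wr _] wq] _] hL H.
  have := lt_le_trans hrho hL; rewrite -wq H // mul0r.
  by rewrite ltxx.
have conj0 : forall (ss : 'cV[R[i]]_Nt), hconj U *m econj ss = 0 -> U^T *m ss = 0.
  move=> ss; rewrite hconj_econj -econjM => /(congr1 (@econj _ _ _)).
  rewrite econjK => ->; apply/matrixP => i j; rewrite !mxE conjC0 //.
split; [|split; [|split]].
- move=> Ld _ HL hL; apply/negP => /eqP /conj0 a0.
  apply: (zero_contra _ _ _ HL hL) => w wr.
  rewrite /Xi0 qformXi GuE a0 tens0mx inner0l normr0 expr0n /= mulr0 add0r.
  apply: big1 => q _.
  by rewrite GuE (rng _ _ _ w (Pd_orth q) wr) normr0 expr0n /= mulr0.
- move=> Li _ HL hL.
  have [q Hq|Hn] := pickP (fun q => hconj U *m econj (s q) != 0).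
    by exists q.
  exfalso; apply: (zero_contra _ _ _ HL hL) => w wr.
  rewrite /Xi0 qformXi big1 ?addr0; last first.
    move=> q _; move: (Hn q) => /= /negbFE /eqP /conj0 aq.
    by rewrite GuE aq tens0mx inner0l normr0 expr0n /= mulr0.
  case: b0cases => [b00|b0pos]; first by rewrite b00 mul0r mul0r.
  by rewrite GuE (rng _ _ _ w (Pi_orth b0pos) wr) normr0 expr0n /= mulr0.
- move=> Ld lam _ HL _ b0pos c0 Hlam Hle.
  have na := na_ge hs0 Hlam.
  have lam0 : 0 < lam.
    apply: lt_le_trans Hle; apply: divr_gt0; last by apply: mulr_gt0.
    by apply: divr_gt0 => //; apply: mulr_gt0.
  have na0 := lt_le_trans (mulr_gt0 lam0 Ntpos) na.
  apply: le_trans (arith hsz Ntpos (mulr_gt0 b0pos c0) Hle na) _.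
  have := key hPd iPd HL na0 c0 (coef := b0 / sz2) (X := Xi0).
  have -> : b0 * qform Pi_d g0 / sz2 * inner (U^T *m s0) (U^T *m s0) =
    b0 / sz2 * inner (U^T *m s0) (U^T *m s0) * qform Pi_d g0.
    by ring.
  apply; rewrite /Xi0 qformXi GuE big1 ?addr0 //.
  move=> q _; rewrite GuE (rng _ _ _ _ (Pd_orth q)) ?normr0 ?expr0n /= ?mulr0 //.
  by exists (U^T *m s0 *t g0).
- move=> Li lam M _ HL _ _ [[q Mq] _] M0 Hlam Hle.
  have c0 : 0 < qform Pi_i (g q) by move: M0; rewrite -Mq pmulr_rgt0.
  have na := na_ge (hs q) Hlam.
  have lam0 : 0 < lam.
    apply: lt_le_trans Hle; apply: divr_gt0 => //.
    by apply: divr_gt0 => //; apply: mulr_gt0.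
  have na0 := lt_le_trans (mulr_gt0 lam0 Ntpos) na.
  apply: le_trans (arith hsz Ntpos M0 Hle na) _.
  have := key hPi' iPi' HL na0 c0 (coef := sig2 q / sz2) (X := Xi0).
  have -> : M / sz2 * inner (U^T *m s q) (U^T *m s q) =
    sig2 q / sz2 * inner (U^T *m s q) (U^T *m s q) * qform Pi_i (g q).
    by rewrite -Mq; ring.
  apply; rewrite /Xi0 qformXi.
  apply: ler_wpDl.
    apply: mulr_ge0; [exact: divr_ge0 (ltW hsz)|exact: exprn_ge0].
  rewrite (bigD1 q) //= GuE; apply: ler_wpDr; last exact: lexx.
  apply: sumr_ge0 => q' _; apply: mulr_ge0; last exact: exprn_ge0.
  by apply: divr_ge0; apply: ltW.
Qed.
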